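(* Let $f\in\mathbb R[x_1,\dots,x_n]$ be not identically zero and let $s(x)=\sum_{j=1}^n x_j$. Then the polynomial $s f$ has at least $n$ distinct monomials (with nonzero coefficients). *)

(* Defs.v *)
From HB Require Import structures.
From mathcomp Require Import all_boot all_order all_algebra.
From mathcomp Require Import reals.
From mathcomp Require Export mpoly.
Set Implicit Arguments. Unset Strict Implicit. Unset Printing Implicit Defensive.
Import Order.TTheory GRing.Theory Num.Theory.
Local Open Scope ring_scope.

Definition sum_vars (R : realType) (n : nat) : {mpoly R[n]} := \sum_(j < n) 'X_j.

(* Main.v *)
Require Import Defs.
From HB Require Import structures.
From mathcomp Require Import all_boot all_order all_algebra.
From mathcomp Require Import reals.
From mathcomp Require Import mpoly.
Import GRing.Theory.
Local Open Scope ring_scope.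

Section Aux.
Variable n : nat.

Lemma exmax (s : seq 'X_{1..n}) (i : 'I_n) : s != [::] ->
  exists m, (m \in s) && all (fun y : 'X_{1..n} => (y i <= m i)%N) s.
Proof.
elim: s => [//|x t IH] _.
case: t IH => [|y t] IH.
  by exists x; rewrite mem_seq1 eqxx /= leqnn.
have [m /andP [mt ma]] := IH isT.
case: (leqP (x i) (m i)) => hx.
  by exists m; rewrite inE mt orbT /=; apply/andP; split.
exists x; apply/andP; split; first by rewrite inE eqxx.
apply/allP => z; rewrite inE => /orP [/eqP -> //|].
move=> zt; move/allP: ma => /(_ z zt) h.
exact: leq_trans h (ltnW hx).
Qed.

End Aux.

Theorem lemma3 (R : realType) (n : nat) (f : {mpoly R[n]}) :
  f != 0 -> (n <= size (msupp (sum_vars R n * f)))%N.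
Proof.
move=> f0.
have ne : msupp f != [::] by rewrite msupp_eq0.
pose P (i : 'I_n) (m : 'X_{1..n}) :=
  (m \in msupp f) && all (fun y : 'X_{1..n} => (y i <= m i)%N) (msupp f).
have ex i : exists m, P i m by exact: exmax.
pose M i := xchoose (ex i).
have MP i : P i (M i) := xchooseP (ex i).
pose F i := (U_(i) + M i)%MM.
have key j : F j \in msupp (sum_vars R n * f).
  have /andP [Min Mmax] := MP j.
  rewrite mcoeff_msupp /sum_vars mulr_suml raddf_sum /= (bigD1 j) //=.
  rewrite big1 ?addr0.
    by rewrite -(commr_mpolyX U_(j) f) /F mcoeffMX -mcoeff_msupp.
  move=> k kj; rewrite -(commr_mpolyX U_(k) f).
  apply/eqP; rewrite mcoeff_eq0.
  case le: (U_(k) <= F j)%MM.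
    rewrite -(submK le) addmC mcoeff_msupp mcoeffMX -mcoeff_msupp.
    apply/negP => /(allP Mmax); rewrite mnmBE /F mnmDE !mnm1E eqxx.
    idtac.
    by rewrite (negbTE kj) subn0 add1n ltnn.
  rewrite (perm_mem (msuppMX f U_(k))); apply/negP => /mapP [m' _ e].
  by move: le; rewrite e lem_addr.
have inj : injective F.
  move=> j k /mnmP /(_ j); rewrite /F !mnmDE !mnm1E eqxx.
  have /andP [Mkin _] := MP k.
  have /andP [_ /allP /(_ _ Mkin) h] := MP j.
  case: eqP => // _ /= e; move: h; rewrite add0n in e; rewrite -e add1n ltnn //.
have := uniq_leq_size (s1 := map F (enum 'I_n)) _ _.
rewrite size_map size_enum_ord; apply.
  by rewrite map_inj_uniq ?enum_uniq.
by move=> x /mapP [j _ ->]; exact: key.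
Qed.
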